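(* Let $f$ be a probability density on $\mathbb{R}^p$ with $\int_{\mathbb{R}^p}\|x\|f(x)\,dx<\infty$, let $K(x)=(2\pi)^{-p/2}e^{-\|x\|^2/2}$, $K_\epsilon(x)=\epsilon^{-p}K(x/\epsilon)$ for fixed $\epsilon>0$, $f_\epsilon=f*K_\epsilon$ with $\nabla f_\epsilon(m)=\int_{\mathbb{R}^p}\nabla K_\epsilon(m-t)f(t)\,dt$, and $\lambda>0$. Define $$h_\infty(m)=\lim_{c\to\infty}\frac{\nabla f_\epsilon(cm)-\lambda cm}{c},\qquad m\in\mathbb{R}^p.$$ Then this limit exists for every $m$, and the ODE $\dot m(t)=h_\infty(m(t))$ has the origin as its unique globally asymptotically stable equilibrium point.
   Context: The convolution is $(u*v)(x)=\int_{\mathbb{R}^p}u(x-t)v(t)\,dt$. *)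

(* Defs.v *)
From HB Require Import structures.
From mathcomp Require Import all_boot all_order all_algebra.
From mathcomp Require Import all_classical all_reals all_analysis.
Set Implicit Arguments. Unset Strict Implicit. Unset Printing Implicit Defensive.
Import Order.TTheory GRing.Theory Num.Theory.
Import numFieldNormedType.Exports.
Local Open Scope classical_set_scope.
Local Open Scope ring_scope.

Section defs.
Context {R : realType} {p : nat}.

(* R^p is represented by row vectors 'rV[R]_p (normed space, topology,
   derivatives); Lebesgue measure lives on p.-tuple R, which carries the
   product (= Borel) sigma-algebra; [tup2rv] identifies the two. *)
Definition tup2rv (t : p.-tuple R) : 'rV[R]_p := \row_i tnth t i.

Definition enorm (x : 'rV[R]_p) : R := Num.sqrt (\sum_i x ord0 i ^+ 2).

Definition is_lebesgue_measure (mu : {measure set (p.-tuple R) -> \bar R}) :=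
  forall a b : p.-tuple R, (forall i, tnth a i <= tnth b i) ->
    mu [set x | forall i, tnth a i <= tnth x i < tnth b i] =
      (\prod_i (tnth b i - tnth a i))%:E.

Definition is_density (mu : {measure set (p.-tuple R) -> \bar R})
    (f : 'rV[R]_p -> R) :=
  [/\ measurable_fun setT (f \o tup2rv), (forall x, 0 <= f x) &
      (\int[mu]_t (f (tup2rv t))%:E = 1)%E].

Definition gaussK (x : 'rV[R]_p) : R :=
  (2 * pi) `^ (- (p%:R / 2)) * expR (- (enorm x ^+ 2) / 2).

Definition Keps (eps : R) (x : 'rV[R]_p) : R :=
  eps ^- p * gaussK (eps^-1 *: x).

Definition grad (g : 'rV[R]_p -> R) (x : 'rV[R]_p) : 'rV[R]_p :=
  \row_i ('D_(delta_mx ord0 i) g x : R).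

Definition gradf_eps (mu : {measure set (p.-tuple R) -> \bar R})
    (f : 'rV[R]_p -> R) (eps : R) (m : 'rV[R]_p) : 'rV[R]_p :=
  \row_i Rintegral mu setT
    (fun t => (grad (Keps eps) (m - tup2rv t)) ord0 i * f (tup2rv t)).

Definition is_solution (h : 'rV[R]_p -> 'rV[R]_p) (m : R -> 'rV[R]_p) :=
  {within `[0, +oo[, continuous m} /\
  forall t : R, 0 < t -> derivable m t 1 /\ derive1 m t = h (m t).

Definition origin_unique_GAS (h : 'rV[R]_p -> 'rV[R]_p) :=
  [/\ h 0 = 0,
      (forall x, h x = 0 -> x = 0),
      (forall e : R, 0 < e -> exists2 d : R, 0 < d &
         forall m, is_solution h m -> enorm (m 0) < d ->
           forall t, 0 <= t -> enorm (m t) < e) &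
      (forall m, is_solution h m -> m t @[t --> +oo] --> (0 : 'rV[R]_p))].

End defs.

(* Main.v *)
Require Import Defs.
From HB Require Import structures.
From mathcomp Require Import all_boot all_order all_algebra.
From mathcomp Require Import all_classical all_reals all_analysis.
From mathcomp Require Import ring lra measurable_realfun.
Import Order.TTheory GRing.Theory Num.Theory.
Import numFieldNormedType.Exports.
Local Open Scope classical_set_scope.
Local Open Scope ring_scope.
Lemma quad_der (R : realType) (C k a S : R) :
  is_derive (0:R) 1 (fun h : R => C * expR (k * (h * h + a * h + S)))
     (C * (expR (k * S) * (k * a))).
Proof.
have h1 : is_derive (0:R) 1 (fun h : R => h * h + a * h + S) a.
  have -> : (fun h : R => h * h + a * h + S) = (id * id + a \*: id + cst S)%R.
    by apply/funext => h.
  apply: is_derive_eq.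
  by rewrite /= !scale0r !add0r addr0 [_%:A]mulr1.
have h2 : is_derive (0:R) 1 (fun h : R => expR (k * (h * h + a * h + S))) (expR (k * S) * (k * a)).
  have -> : (fun h : R => expR (k * (h * h + a * h + S))) = expR \o (k \*: (fun h : R => h * h + a * h + S)).
    by apply/funext => h.
  apply: is_derive_eq.
  by rewrite /= !mulr0 !add0r.
have -> : (fun h : R => C * expR (k * (h * h + a * h + S))) = C \*: (fun h : R => expR (k * (h * h + a * h + S))).
  by apply/funext => h.
apply: is_derive_eq.
by [].
Qed.

Section K.
Context {R : realType} {p : nat}.

Lemma enorm_sq (x : 'rV[R]_p) : enorm x ^+ 2 = \sum_i x ord0 i ^+ 2.
Proof. by rewrite /enorm sqr_sqrtr // sumr_ge0 // => i _; exact: sqr_ge0. Qed.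

Definition CK (eps : R) := eps ^- p * (2 * pi) `^ (- (p%:R / 2)).

Lemma CK_gt0 eps : 0 < eps -> 0 < CK eps.
Proof.
move=> e0; rewrite /CK mulr_gt0 //; first by rewrite invr_gt0 exprn_gt0.
by apply: powR_gt0; rewrite mulr_gt0 // pi_gt0.
Qed.

Lemma KepsE eps (x : 'rV[R]_p) :
  Keps eps x = CK eps * expR (- (eps ^-2) / 2 * \sum_i x ord0 i ^+ 2).
Proof.
rewrite /Keps /gaussK enorm_sq.
under eq_bigr do rewrite mxE exprMn.
rewrite -mulr_sumr mulrA /CK; congr (_ * expR _).
by rewrite exprVn !mulNr mulrAC.
Qed.

Lemma sum_line (x : 'rV[R]_p) i (h : R) :
  \sum_j ((h *: delta_mx ord0 i + x) ord0 j) ^+ 2 =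
  h * h + 2 * x ord0 i * h + \sum_j x ord0 j ^+ 2.
Proof.
rewrite [LHS](bigD1 i) //= [in RHS](bigD1 i) //= addrA.
congr (_ + _).
  by rewrite !mxE !eqxx /= mulr1; ring.
apply: eq_bigr => j ji; rewrite !mxE eqxx /=.
by move/negbTE: ji => ->; rewrite mulr0 add0r.
Qed.

Lemma D_line (f : 'rV[R]_p -> R) x v :
  'D_v f x = 'D_1 (fun h : R => f (h *: v + x)) 0.
Proof.
rewrite /derive /=.
set g1 := (fun h : R => _); set g2 := (fun h : R => _).
suff -> : g1 = g2 by [].
apply/funext => h; rewrite /g1 /g2 /=.
by rewrite addr0 scale0r add0r [h%:A]mulr1.
Qed.

Lemma grad_Keps eps (x : 'rV[R]_p) i : 0 < eps ->
  grad (Keps eps) x ord0 i = - eps ^-2 * x ord0 i * Keps eps x.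
Proof.
move=> e0; rewrite /grad mxE D_line.
have -> : (fun h : R => Keps eps (h *: delta_mx ord0 i + x)) =
   (fun h : R => CK eps * expR ((- (eps ^-2) / 2) *
       (h * h + (2 * x ord0 i) * h + \sum_j x ord0 j ^+ 2))).
  by apply/funext => h; rewrite KepsE sum_line.
have [_ ->] := quad_der _ (CK eps) (- (eps ^-2) / 2) (2 * x ord0 i)
   (\sum_j x ord0 j ^+ 2).
by rewrite KepsE; field; rewrite gt_eqF.
Qed.


Lemma abs_exp_bound (a y : R) : 0 < a -> `|y| * expR (- a * y ^+ 2) <= 1 + a^-1.
Proof.
move=> a0.
have e := expR_ge1Dx (a * y ^+ 2).
have Epos : 0 < expR (a * y ^+ 2) by exact: expR_gt0.
rewrite mulNr expRN ler_pdivrMr //.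
apply: le_trans (_ : (1 + a^-1) * (1 + a * y ^+ 2) <= _); last first.
  by rewrite ler_pM2l // ltr_wpDr // ?invr_ge0 ?ltW.
have -> : (1 + a^-1) * (1 + a * y ^+ 2) = 1 + a * y ^+ 2 + a^-1 + y ^+ 2.
  by field; rewrite gt_eqF.
have ha : 0 <= a * y ^+ 2 by apply: mulr_ge0; [exact: ltW | exact: sqr_ge0].
have hai : 0 <= a^-1 by rewrite invr_ge0 ltW.
have hy : y ^+ 2 = `|y| ^+ 2 by rewrite real_normK ?num_real.
rewrite hy in ha *; have := sqr_ge0 (`|y| - 1); rewrite sqrrB1 mulr2n => h1; nra.
Qed.

Definition Bd (eps : R) := eps ^-2 * CK eps * (1 + (eps ^-2 / 2)^-1).

Lemma grad_bound eps (x : 'rV[R]_p) i : 0 < eps ->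
  `|grad (Keps eps) x ord0 i| <= Bd eps.
Proof.
move=> e0; rewrite grad_Keps // KepsE.
have a0 : 0 < eps ^-2 / 2 by rewrite divr_gt0 // invr_gt0 exprn_gt0.
have C0 : 0 < CK eps := CK_gt0 eps e0.
set E := expR _; set C := CK eps.
have A0 : 0 < eps ^-2 * C by rewrite mulr_gt0 // invr_gt0 exprn_gt0.
have -> : - eps ^-2 * x ord0 i * (C * E) = - (eps ^-2 * C) * (x ord0 i * E) by ring.
rewrite normrM normrN (gtr0_norm A0) normrM (ger0_norm (expR_ge0 _)).
rewrite /Bd ler_pM2l //.
apply: le_trans _ (abs_exp_bound _ (x ord0 i) a0).
rewrite ler_wpM2l // /E ler_expR !mulNr lerN2 ler_pM2l //.
rewrite (bigD1 i) //= lerDl sumr_ge0 // => j _; exact: sqr_ge0.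
Qed.

End K.
Section IB.
Context d (T : measurableType d) (R : realType) (mu : {measure set T -> \bar R}).
Local Open Scope ereal_scope.

Lemma nn_le_integral (f1 f2 : T -> \bar R) :
  (forall x, 0 <= f1 x) -> (forall x, f1 x <= f2 x) ->
  \int[mu]_x f1 x <= \int[mu]_x f2 x.
Proof.
move=> f10 f12.
have f20 : forall x, 0 <= f2 x by move=> x; exact: le_trans (f10 x) (f12 x).
rewrite !ge0_integralTE //.
apply: ge_ereal_sup => _ [h hf <-].
apply: ereal_sup_ubound; exists h => //= x.
exact: le_trans (hf x) (f12 x).
Qed.

Lemma int_bound (F g : T -> R) (B : R) :
  (0 <= B)%R -> measurable_fun setT F -> (forall t, 0 <= F t)%R ->
  \int[mu]_t (F t)%:E = 1 -> (forall t, `|g t| <= B * F t)%R ->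
  (`|Rintegral mu setT g| <= B)%R.
Proof.
move=> B0 mF F0 F1 gB.
have IB : \int[mu]_t (B * F t)%:E = B%:E.
  rewrite (eq_integral (fun t => B%:E * (F t)%:E)); last by move=> t _; rewrite EFinM.
  rewrite (ge0_integralZl_EFin mu measurableT (f1 := fun t => (F t)%:E)) //=; last exact/measurable_EFinP.
    by rewrite F1 mule1.
  by move=> t _; rewrite lee_fin.
have hp : \int[mu]_t ((fun t => (g t)%:E) ^\+ t) <= B%:E.
  rewrite -IB; apply: nn_le_integral => t; first exact: funepos_ge0.
  rewrite funeposE /= ge_max !lee_fin (mulr_ge0 B0 (F0 t)) andbT.
  exact: le_trans (ler_norm _) (gB t).
have hn : \int[mu]_t ((fun t => (g t)%:E) ^\- t) <= B%:E.
  rewrite -IB; apply: nn_le_integral => t; first exact: funeneg_ge0.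
  rewrite funenegE /= ge_max !lee_fin (mulr_ge0 B0 (F0 t)) andbT.
  by apply: le_trans (gB t); rewrite -normrN ler_norm.
have hp0 : 0 <= \int[mu]_t ((fun t => (g t)%:E) ^\+ t).
  by apply: integral_ge0 => t _; exact: funepos_ge0.
have hn0 : 0 <= \int[mu]_t ((fun t => (g t)%:E) ^\- t).
  by apply: integral_ge0 => t _; exact: funeneg_ge0.
rewrite /Rintegral integralE.
move: hp hn hp0 hn0.
case: (\int[mu]_t _) => [a| |] //; case: (\int[mu]_t _) => [b| |] //.
rewrite !lee_fin /= => ha hb ha0 hb0.
by rewrite ler_norml; apply/andP; split; lra.
Qed.

End IB.
Section ODE.
Context {R : realType} {p : nat}.

Lemma comp_derive (m : R -> 'rV[R]_p) (s : R) j :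
  derivable m s 1 ->
  is_derive s 1 (fun r => m r ord0 j) ('D_1 m s ord0 j).
Proof.
move=> dm.
have cq : (fun h : R => h^-1 *: ((m \o shift s) (h *: 1) - m s)) @ 0^' --> 'D_1 m s.
  exact: dm.
have cj : (fun h : R => h^-1 *: (((fun r => m r ord0 j) \o shift s) (h *: 1) - m s ord0 j)) @ 0^' --> 'D_1 m s ord0 j.
  have -> : (fun h : R => h^-1 *: (((fun r => m r ord0 j) \o shift s) (h *: 1) - m s ord0 j)) =
     (fun M : 'rV[R]_p => M ord0 j) \o
     (fun h : R => h^-1 *: ((m \o shift s) (h *: 1) - m s)).
    by apply/funext => h /=; rewrite !mxE.
  apply: continuous_cvg => //; exact: coord_continuous.
apply: DeriveDef; first exact: (cvgP _ cj).
by rewrite /derive; apply: cvg_lim.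
Qed.

Lemma sol_formula (lam : R) (m : R -> 'rV[R]_p) :
  is_solution (fun x => (- lam) *: x) m ->
  forall t, 0 <= t -> m t = expR (- lam * t) *: m 0.
Proof.
move=> [mc md] t t0; apply/rowP => j; rewrite [RHS]mxE.
pose u := fun r => expR (lam * r) * m r ord0 j.
have du : forall s : R, 0 < s -> is_derive s (1 : R) u 0.
  move=> s s0; have [ds es] := md s s0.
  have hj := comp_derive _ _ j ds.
  rewrite -derive1E es mxE in hj.
  have -> : u = (expR \o (lam \*: (@id R))) * (fun r => m r ord0 j).
    by apply/funext.
  apply: is_derive_eq.
  rewrite [lam%:A]mulr1.
  change (expR (lam * s) * (- lam * m s ord0 j) + m s ord0 j * (expR (lam * s) * lam) = 0).
  ring.
have mcW : {within `[0, t], continuous m}.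
  apply: continuous_subspaceW mc => x /=; rewrite !in_itv /= => /andP[-> _].
  by [].
have c1 : {within `[0, t], continuous (fun r => expR (lam * r))}.
  apply: continuous_subspaceT => r.
  have : is_derive r 1 (expR \o (lam \*: (@id R))) (expR (lam * r) * (lam * 1)).
    apply: is_derive_eq; by [].
  by case=> hd _; exact/differentiable_continuous/derivable1_diffP.
have c2 : {within `[0, t], continuous (fun r => m r ord0 j)}.
  move=> x; apply: (@continuous_comp _ _ _ (from_subspace _ m) (fun M : 'rV[R]_p => M ord0 j) x (mcW x)).
  exact: coord_continuous.
have cu : {within `[0, t], continuous u}.
  by move=> x; exact: (continuousM (c1 x) (c2 x)).
have hd : forall x, x \in `]0, t[ -> is_derive x 1 u ((fun _ => (0:R)) x).
  by move=> x; rewrite in_itv /= => /andP[x0 _]; exact: du.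
have [c _] := MVT_segment t0 hd cu.
rewrite mul0r => /eqP; rewrite subr_eq0 => /eqP; rewrite /u mulr0 expR0 mul1r => hu.
rewrite mulNr expRN -hu mulKf //; last by rewrite gt_eqF // expR_gt0.
Qed.

Lemma enormZ (c : R) (x : 'rV[R]_p) : enorm (c *: x) = `|c| * enorm x.
Proof.
rewrite /enorm; under eq_bigr do rewrite mxE exprMn.
by rewrite -mulr_sumr sqrtrM ?sqr_ge0 // sqrtr_sqr.
Qed.

Lemma enorm_ge0 (x : 'rV[R]_p) : 0 <= enorm x.
Proof. exact: sqrtr_ge0. Qed.

Lemma GAS (lam : R) : 0 < lam -> origin_unique_GAS (fun x : 'rV[R]_p => (- lam) *: x).
Proof.
move=> l0; split.
- by rewrite scaler0.
- by move=> x /eqP; rewrite scaler_eq0 oppr_eq0 gt_eqF //= => /eqP.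
- move=> e e0; exists e => // m sm m0 t t0.
  rewrite (@sol_formula lam m sm t t0) enormZ gtr0_norm ?expR_gt0 //.
  apply: le_lt_trans m0; rewrite ler_piMl ?enorm_ge0 // expR_le1 mulNr oppr_le0.
  by rewrite mulr_ge0 // ltW.
- move=> m sm.
  have -> : (0 : 'rV[R]_p) = 0 *: m 0 by rewrite scale0r.
  apply: (cvg_trans (G := (fun t => expR (- lam * t) *: m 0) @ +oo)).
    apply: near_eq_cvg; near=> t.
    by rewrite (@sol_formula lam m sm t) //; near: t; exists 0.
  apply: cvgZl.
  rewrite (_ : (fun x => expR (- lam * x)) = (fun z => expR (- z)) \o (fun z => lam * z)); last first.
    by apply: eq_fun => x; rewrite mulNr.
  apply: (@cvg_comp _ _ _ _ _ _ (pinfty_nbhs R)); last exact: cvgr_expR.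
  by apply: gt0_cvgMry => //; exact: cvg_id.
  Unshelve. all: by end_near.
Qed.

End ODE.

Lemma rv_norm_le {R : realType} {p : nat} (v : 'rV[R]_p) (B : R) :
  0 <= B -> (forall i, `|v ord0 i| <= B) -> `|v| <= B.
Proof.
move=> B0 h; change (mx_norm v <= B); rewrite mx_normrE.
elim/big_ind: _ => //.
  by move=> x y hx hy; rewrite ge_max hx hy.
by case=> i j _ /=; rewrite (ord1 i).
Qed.

Lemma Bd_ge0 {R : realType} {p : nat} (eps : R) : 0 < eps -> 0 <= Bd (p:=p) eps.
Proof.
move=> e0; rewrite /Bd; apply: mulr_ge0; first apply: mulr_ge0.
- by rewrite invr_ge0 exprn_ge0 // ltW.
- exact/ltW/CK_gt0.
- by rewrite addr_ge0 // invr_ge0 divr_ge0 // invr_ge0 exprn_ge0 // ltW.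
Qed.

Theorem proposition3 (R : realType) (p : nat)
  (mu : {measure set (p.-tuple R) -> \bar R}) (f : 'rV[R]_p -> R)
  (eps lam : R) :
  is_lebesgue_measure mu ->
  is_density mu f ->
  (\int[mu]_t (enorm (tup2rv t) * f (tup2rv t))%:E < +oo)%E ->
  0 < eps -> 0 < lam ->
  exists hinf : 'rV[R]_p -> 'rV[R]_p,
    (forall m : 'rV[R]_p,
       (fun c : R => c^-1 *: (gradf_eps mu f eps (c *: m) - (lam * c) *: m))
         @ +oo --> hinf m) /\
    origin_unique_GAS hinf.
Proof.
move=> _ dens _ e0 l0.
have [mf f0 f1] := dens.
have GB : forall (m : 'rV[R]_p) (i : 'I_p), `|gradf_eps mu f eps m ord0 i| <= Bd (p:=p) eps.
  move=> m i; rewrite /gradf_eps mxE.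
  apply: (@int_bound _ _ _ mu (f \o tup2rv)) => //.
  - exact: Bd_ge0.
  - by move=> t; exact: f0.
  - move=> t; rewrite normrM (ger0_norm (f0 _)); apply: ler_wpM2r => //.
    exact: grad_bound.
exists (fun x => (- lam) *: x); split; last exact: GAS.
move=> m.
have E : {near +oo, (fun c : R => c^-1 *: gradf_eps mu f eps (c *: m) + (- lam) *: m) =1
   (fun c : R => c^-1 *: (gradf_eps mu f eps (c *: m) - (lam * c) *: m))}.
  near=> c.
  have c0 : c != 0 by apply: lt0r_neq0; near: c; exists 0.
  by rewrite scalerBr scalerA mulrCA mulVf // mulr1 scaleNr.
apply: cvg_trans (near_eq_cvg E) _.
rewrite /= -[(- lam) *: m]add0r; apply: cvgD; last by rewrite add0r; exact: cvg_cst.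
apply: norm_cvg0.
apply: (@squeeze_cvgr _ _ _ _ (fun _ => 0) (fun c => c^-1 * Bd (p:=p) eps)).
- near=> c.
  have c0 : 0 < c by near: c; exists 0.
  rewrite normr_ge0 /= normrZ gtr0_norm ?invr_gt0 // ler_pM2l ?invr_gt0 //.
  apply: rv_norm_le; first exact: Bd_ge0.
  by move=> i; exact: GB.
- exact: cvg_cst.
- rewrite -(mul0r (Bd (p:=p) eps)); apply: cvgMl.
  apply/gtr0_cvgV0; first by exists 0.
  exact: cvg_id.
Unshelve. all: by end_near.
Qed.
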